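(* The problem ExistsNecJR under the Lottery model — decide whether there exists a committee $W\subseteq C$ with $|W|=k$ that satisfies JR with respect to every plausible approval profile — is solvable in polynomial time when every approval set to which any voter assigns positive probability contains exactly one candidate.
   Context: An ABC instance consists of voters $V=[n]$, candidates $C=[m]$, an approval profile $A=(A_1,\dots,A_n)$ with $A_i\subseteq C$, and a positive integer $k$. A committee is a set $W\subseteq C$ with $|W|=k$. $W$ satisfies justified representation (JR) with respect to $A$ if for every $V'\subseteq V$ with $|V'|\ge \frac{n}{k}$ and $\bigcap_{i\in V'}A_i\neq\emptyset$, there is $i\in V'$ with $A_i\cap W\neq\emptyset$. In the Lottery model, each voter $i$ is given an explicit probability distribution $\{(\lambda_r,S_r)\}_{r\in[s_i]}$ over approval sets $S_r\subseteq C$ with $\lambda_r>0$, $\sum_r\lambda_r=1$; voters' approval sets are drawn independently. A plausible approval profile is an approval profile with positive probability. *)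

(* Defs.v *)
From mathcomp Require Import all_boot all_order all_algebra.
Set Implicit Arguments. Unset Strict Implicit. Unset Printing Implicit Defensive.
Import Order.TTheory GRing.Theory Num.Theory.

(* Voters are 0..n-1, candidates 0..m-1.  Voter i's lottery is the
   list [(lambda_1,S_1); ...; (lambda_s,S_s)] = nth [::] lot i,
   where each S_r is given as a sequence of candidate indices (read as
   the set of its elements). *)
Record instance := Instance {
  inst_n : nat;
  inst_m : nat;
  inst_k : nat;
  inst_lot : seq (seq (rat * seq nat)) }.

Definition lottery (I : instance) (i : nat) : seq (rat * seq nat) :=
  nth [::] (inst_lot I) i.

Definition valid_instance (I : instance) : Prop :=
  [/\ 0 < inst_n I, 0 < inst_k I,
      size (inst_lot I) = inst_n I &
      forall i, i < inst_n I ->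
        [/\ lottery I i != [::],
            all (fun p => 0 < p.1)%R (lottery I i),
            (\sum_(p <- lottery I i) p.1)%R = 1%R &
            all (fun p => all (fun c => c < inst_m I) p.2) (lottery I i)]]%N.

Definition setof (m : nat) (S : seq nat) : {set 'I_m} :=
  [set c : 'I_m | val c \in S].

Definition singleton_lotteries (I : instance) : Prop :=
  forall i, (i < inst_n I)%N -> forall p, p \in lottery I i -> (0 < p.1)%R ->
    #|setof (inst_m I) p.2| = 1%N.

(* Probability of an approval profile A (voters draw independently). *)
Definition profile_prob (I : instance)
    (A : 'I_(inst_n I) -> {set 'I_(inst_m I)}) : rat :=
  (\prod_(i : 'I_(inst_n I))
     \sum_(p <- lottery I i | setof (inst_m I) p.2 == A i) p.1)%R.

Definition plausible (I : instance)
    (A : 'I_(inst_n I) -> {set 'I_(inst_m I)}) : Prop :=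
  (0 < profile_prob A)%R.

Definition JR (n m k : nat) (A : 'I_n -> {set 'I_m}) (W : {set 'I_m}) : Prop :=
  forall V' : {set 'I_n},
    (n%:R / k%:R <= (#|V'|%:R : rat))%R ->
    (exists c : 'I_m, forall i, i \in V' -> c \in A i) ->
    exists2 i, i \in V' & A i :&: W != set0.

Definition ExistsNecJR (I : instance) : Prop :=
  exists W : {set 'I_(inst_m I)},
    #|W| = inst_k I /\
    forall A : 'I_(inst_n I) -> {set 'I_(inst_m I)},
      plausible A -> @JR (inst_n I) (inst_m I) (inst_k I) A W.

(*  Computation model: unit-cost RAM with addition, truncated          *)
(*  subtraction and indirect addressing (polynomially equivalent to    *)
(*  Turing machines).                                                  *)

Inductive instr :=
  | IConst of nat & nat
  | IAdd of nat & nat & nat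
  | ISub of nat & nat & nat
  | ILoad of nat & nat
  | IStore of nat & nat
  | IJz of nat & nat
  | IJmp of nat
  | IHalt.

Definition memory := nat -> nat.

Definition upd (M : memory) (a v : nat) : memory :=
  fun x => if x == a then v else M x.

(* One step from a configuration (pc, M); instructions outside the
   program are treated as IHalt (and handled by [exec]). *)
Definition step (P : seq instr) (cfg : nat * memory) : nat * memory :=
  let: (pc, M) := cfg in
  match nth IHalt P pc with
  | IConst d c => (pc.+1, upd M d c)
  | IAdd d a b => (pc.+1, upd M d (M a + M b))
  | ISub d a b => (pc.+1, upd M d (M a - M b))
  | ILoad d a => (pc.+1, upd M d (M (M a)))
  | IStore a s => (pc.+1, upd M (M a) (M s))
  | IJz a l => (if M a == 0 then l else pc.+1, M)
  | IJmp l => (l, M)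
  | IHalt => (pc, M)
  end.

Fixpoint exec (P : seq instr) (t : nat) (cfg : nat * memory) : option memory :=
  match t with
  | 0 => None
  | t'.+1 =>
      match nth IHalt P cfg.1 with
      | IHalt => Some cfg.2
      | _ => exec P t' (step P cfg)
      end
  end.

Definition init_mem (s : seq nat) : memory :=
  fun x => if x is j.+1 then nth 0 s j else size s.

Definition bitsize (s : seq nat) : nat :=
  \sum_(x <- s) (trunc_log 2 x).+1.

Definition encode_entry (p : rat * seq nat) : seq nat :=
  [:: absz (numq p.1); absz (denq p.1); size p.2] ++ p.2.

Definition encode_voter (d : seq (rat * seq nat)) : seq nat :=
  size d :: flatten (map encode_entry d).

Definition encode (I : instance) : seq nat :=
  [:: inst_n I; inst_m I; inst_k I] ++ flatten (map encode_voter (inst_lot I)).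

(* Main.v *)
Require Import Defs.
From mathcomp Require Import all_boot all_order all_algebra zify.
Set Implicit Arguments. Unset Strict Implicit. Unset Printing Implicit Defensive.

Definition prog : seq instr := [::
 IAdd 0 0 0; IAdd 0 0 0; IAdd 0 0 0; IStore 0 1; IConst 1 1; IAdd 0 0 1;
 IStore 0 2; IAdd 0 0 1; IStore 0 3; IAdd 0 0 1; IStore 0 4; IAdd 0 0 1;
 IStore 0 5; IAdd 0 0 1; IStore 0 6; IAdd 0 0 1; IStore 0 7; IAdd 0 0 1;
 IStore 0 8; IAdd 0 0 1; IStore 0 9; IAdd 0 0 1; IStore 0 10; IAdd 0 0 1;
 IStore 0 11; IAdd 0 0 1; IStore 0 12; IAdd 0 0 1; IStore 0 13; IAdd 0 0 1;
 IStore 0 14; IAdd 0 0 1; IStore 0 15; (* 33 *)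
 IConst 2 14; ISub 2 0 2; IConst 3 15; (* 36 *)
 IAdd 4 3 1; ISub 5 2 4; IJz 5 44; ILoad 6 4; IAdd 5 2 3; IStore 5 6;
 IAdd 3 3 1; IJmp 36; (* 44 *)
 ILoad 3 2; IAdd 2 2 1; ILoad 4 2; IAdd 2 2 1; ILoad 5 2; IAdd 2 2 1;
 IAdd 6 2 2; IConst 7 0; IConst 13 0; (* 53 *)
 ISub 14 3 13; IJz 14 58; IAdd 13 13 5; IAdd 7 7 1; IJmp 53; (* 58 *)
 IConst 8 0; IConst 12 1; (* 60 *)
 ISub 13 12 3; IJz 13 63; IJmp 96; (* 63 *)
 ILoad 10 2; IAdd 2 2 1; (* 65 *)
 IJz 10 94; ISub 10 10 1; IAdd 2 2 1; IAdd 2 2 1; ILoad 11 2; IAdd 2 2 1; (* 71 *)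
 IJz 11 65; ISub 11 11 1; ILoad 13 2; IAdd 2 2 1; IAdd 13 13 13; IAdd 13 13 6;
 ILoad 14 13; ISub 15 14 12; ISub 0 12 14; IAdd 15 15 0; IJz 15 71; (* 82 *)
 IStore 13 12; IAdd 13 13 1; ILoad 14 13; IAdd 14 14 1; IStore 13 14;
 ISub 15 14 7; ISub 0 7 14; IAdd 15 15 0; IJz 15 92; IJmp 71; (* 92 *)
 IAdd 8 8 1; IJmp 71; (* 94 *)
 IAdd 12 12 1; IJmp 60; (* 96 *)
 ISub 13 8 5; ISub 14 5 4; IAdd 13 13 14; IConst 0 0; IJz 13 102; IHalt;
 IConst 0 1; IHalt ].



Inductive steps : nat -> nat * memory -> nat * memory -> Prop :=
| st0 c : steps 0 c c
| stS t c c' : nth IHalt prog c.1 <> IHalt -> steps t (step prog c) c' -> steps t.+1 c c'.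

Lemma exec_steps t c c' t2 : steps t c c' -> exec prog (t + t2) c = exec prog t2 c'.
Proof.
elim=> // {}t {}c {}c' Hn _ IH; rewrite addSn /= -IH.
by case: (nth IHalt prog c.1) Hn.
Qed.

Definition wp (b : nat) (c : nat * memory) (Q : nat * memory -> Prop) :=
  exists t c', t <= b /\ steps t c c' /\ Q c'.

Lemma wp_done b c (Q : nat * memory -> Prop) : Q c -> wp b c Q.
Proof. by move=> H; exists 0, c; split=> //; split=> //; constructor. Qed.

Lemma wp_step b c Q : nth IHalt prog c.1 <> IHalt -> wp b (step prog c) Q -> wp b.+1 c Q.
Proof. move=> H [t [c' [Ht [Hs HQ]]]]; exists t.+1, c'; split=> //; split=> //; by constructor. Qed.

Lemma wp_mono b b' c (Q Q' : nat * memory -> Prop) :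
  b <= b' -> (forall c, Q c -> Q' c) -> wp b c Q -> wp b' c Q'.
Proof.
move=> Hb HQ [t [c' [Ht [Hs H]]]]; exists t, c'; split; [exact: leq_trans Ht Hb|split=>//].
exact: HQ.
Qed.

Lemma steps_trans t1 t2 c1 c2 c3 : steps t1 c1 c2 -> steps t2 c2 c3 -> steps (t1 + t2) c1 c3.
Proof. elim=> // {}t1 {}c1 {}c2 Hn _ IH H; rewrite addSn; constructor=> //; exact: IH. Qed.

Lemma wp_seq b1 b2 c Q : wp b1 c (fun c' => wp b2 c' Q) -> wp (b1 + b2) c Q.
Proof.
move=> [t1 [c1 [H1 [Hs1 [t2 [c2 [H2 [Hs2 HQ]]]]]]]].
exists (t1 + t2), c2; split; first exact: leq_add.
split=> //; exact: steps_trans Hs1 Hs2.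
Qed.

Definition heapeq (M : memory) (H : memory) := forall x, 16 <= x -> M x = H x.

Lemma wp_reg b pc M Hp d v Q : d < 16 -> heapeq M Hp ->
  (forall M', M' d = v -> (forall r, r < 16 -> r != d -> M' r = M r) -> heapeq M' Hp ->
     wp b (pc, M') Q) -> wp b (pc, upd M d v) Q.
Proof.
move=> Hd HH K; apply: K.
- by rewrite /upd eqxx.
- by move=> r _ Hr; rewrite /upd (negbTE Hr).
- move=> x Hx; rewrite /upd ifN ?HH //; apply/eqP=> E; move: Hx Hd; rewrite E; lia.
Qed.

Lemma wp_heap b pc M Hp d v Q : 16 <= d -> heapeq M Hp ->
  (forall M', (forall r, r < 16 -> M' r = M r) -> heapeq M' (upd Hp d v) ->
     wp b (pc, M') Q) -> wp b (pc, upd M d v) Q.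
Proof.
move=> Hd HH K; apply: K.
- move=> r Hr; rewrite /upd ifN //; apply/eqP=> E; move: Hr Hd; rewrite E; lia.
- by move=> x Hx; rewrite /upd; case: ifP=> // _; rewrite HH.
Qed.


Ltac regrw M HH :=
  repeat match goal with H : M ?r = _ |- context[M ?r] => rewrite H end;
  repeat match goal with |- context[M ?x] => rewrite (HH x); [| lia] end;
  lazymatch type of HH with heapeq _ ?Hp =>
  repeat match goal with H : Hp ?x = _ |- context[Hp ?x] => rewrite H end end.

Ltac xfer_reg M M' Ho :=
  repeat match goal with H : M ?r = ?e |- _ =>
    (let H' := fresh "R" in have H' : M' r = e by rewrite Ho // H); clear H
  | H : M ?r = ?e |- _ => clear H end.

Ltac stp :=
  apply: wp_step; [by [] |];
  cbv beta iota zeta delta [step prog nth fst snd];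
  lazymatch goal with
  | |- wp _ (_, upd ?M ?d ?v) _ =>
    lazymatch goal with HH : heapeq M ?Hp |- _ =>
      regrw M HH;
      first [ apply: (wp_reg _ HH); [reflexivity|];
              let M' := fresh "M" in let Hd := fresh "R" in let Ho := fresh "Ho" in
              let HH' := fresh "HH" in
              move=> M' Hd Ho HH'; xfer_reg M M' Ho; clear Ho HH; clear M;
              rename M' into M; rename HH' into HH
            | apply: (wp_heap _ HH); [lia|];
              let M' := fresh "M" in let Ho := fresh "Ho" in
              let HH' := fresh "HH" in
              move=> M' Ho HH'; xfer_reg M M' Ho; clear Ho HH; clear M;
              rename M' into M; rename HH' into HH ]
    end
  | |- wp _ (_, ?M) _ =>
    lazymatch goal with HH : heapeq M ?Hp |- _ => regrw M HH end
  end.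

Goal forall (D : nat) (M Hp : memory) (s : seq nat) Q,
  24 <= D -> heapeq M Hp -> M 1 = 1 -> M 2 = D ->
  (forall j, j < 5 -> Hp (D + j) = nth 0 s j) ->
  wp (12 + size s) (44, M) Q.
Proof.
move=> D M Hp s Q HD HH R1 R2 Hin.
stp. stp. stp. stp. stp. stp. stp. stp. stp.
Show.
Abort.


Definition holds (Hp : memory) (p : nat) (r : seq nat) :=
  forall j, j < size r -> Hp (p + j) = nth 0 r j.

Lemma holds_hd Hp p x r : holds Hp p (x :: r) -> Hp p = x.
Proof. by move=> H; rewrite -[p]addn0 H. Qed.

Lemma holds_tl Hp p x r : holds Hp p (x :: r) -> holds Hp (p + 1) r.
Proof. by move=> H j Hj; rewrite -addnA add1n (H j.+1). Qed.

Lemma holds_cat Hp p r1 r2 : holds Hp p (r1 ++ r2) -> holds Hp (p + size r1) r2.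
Proof.
move=> H j Hj; rewrite -addnA H ?size_cat; last by lia.
by rewrite nth_cat ltnNge leq_addr /= addKn.
Qed.

Lemma holds_upd Hp p r a v : p + size r <= a -> holds Hp p r -> holds (upd Hp a v) p r.
Proof. move=> Ha H j Hj; rewrite /upd ifN ?H //; apply/eqP; lia. Qed.

Definition ArrInv (Hp : memory) B VID (prev : nat -> nat) (X : seq nat) :=
  forall c, Hp (c + c + B) <= VID /\ (Hp (c + c + B) == VID) = (c \in X) /\
            Hp (c + c + B + 1) = prev c + (c \in X).

Lemma count_upd (U : seq nat) (f g : nat -> nat) c0 q : uniq U -> c0 \in U ->
  (forall c, c != c0 -> g c = f c) -> g c0 = (f c0).+1 ->
  count (fun c => q <= g c) U = count (fun c => q <= f c) U + (g c0 == q).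
Proof.
elim: U => //= a U IH /andP[aU uU]; rewrite in_cons => /orP[/eqP ->|c0U] Hg Hg0.
- have -> : count (fun c => q <= g c) U = count (fun c => q <= f c) U.
    apply: eq_in_count => c cU; rewrite Hg //; apply/eqP => E; move: aU; rewrite -E cU.
    by [].
  rewrite Hg0; have E : ((q <= (f a).+1) : nat) = (q <= f a) + ((f a).+1 == q).
    rewrite leq_eqVlt ltnS; case: eqP => [->|/eqP H]; first by rewrite ltnn eqxx.
    by rewrite eq_sym (negbTE H) addn0.
  rewrite E; lia.
- rewrite (IH uU c0U Hg Hg0) Hg; first lia.
  by apply/eqP => E; move: aU; rewrite E c0U.
Qed.


Definition XPost (n m k B q VID NE : nat) (prev : nat -> nat) (U : seq nat)
   (P : nat) (X rest : seq nat) (pc : nat) (c : nat * memory) :=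
  c.1 = pc /\ exists Hp, heapeq c.2 Hp /\ c.2 1 = 1 /\ c.2 3 = n /\ c.2 4 = m /\
   c.2 5 = k /\ c.2 6 = B /\ c.2 7 = q /\ c.2 2 = P /\
   c.2 8 = count (fun c => q <= prev c + (c \in X)) U /\ c.2 10 = NE /\
   c.2 12 = VID /\ holds Hp P rest /\ P + size rest <= B /\ ArrInv Hp B VID prev X.

Lemma xloop n m k B q VID NE prev U xs : forall X rest M Hp P,
  heapeq M Hp -> M 1 = 1 -> M 3 = n -> M 4 = m -> M 5 = k -> M 6 = B -> M 7 = q ->
  M 2 = P -> M 8 = count (fun c => q <= prev c + (c \in X)) U -> M 10 = NE ->
  M 11 = size xs -> M 12 = VID ->
  holds Hp P (xs ++ rest) -> P + size (xs ++ rest) <= B -> 16 <= P ->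
  ArrInv Hp B VID prev X -> {subset xs <= U} -> uniq U ->
  wp (22 * size xs + 1) (71, M)
     (XPost n m k B q VID NE prev U (P + size xs) (X ++ xs) rest 65).
Proof.
elim: xs => [|c0 xs IH] X rest M Hp P HH R1 R3 R4 R5 R6 R7 R2 R8 R10 R11 R12 Hin HPB HP16 HA HU uU.
- stp. rewrite /=. apply: wp_done; split=> //; exists Hp.
  by rewrite addn0 cats0; do 13 (split => //).
- apply: (wp_mono (b := 22 + (22 * size xs + 1))); [rewrite /=; lia| move=> c; exact|].
  rewrite cat_cons in Hin.
  have Hc0 : Hp P = c0 by exact: holds_hd Hin.
  have Hin' := holds_tl Hin.
  have [Hl1 [Hl2 Hl3]] := HA c0.
  stp. rewrite /=. stp. stp. stp. stp. stp. stp. stp. stp. stp.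
  have R11' : M 11 = size xs by rewrite R12 /= subn1.
  have E1 : P + (size xs).+1 = P + 1 + size xs by lia.
  have E2 : X ++ c0 :: xs = (X ++ [:: c0]) ++ xs by rewrite -catA.
  rewrite E1 E2.
  have HU' : {subset xs <= U} by move=> x Hx; apply: HU; rewrite in_cons Hx orbT.
  have c0U : c0 \in U by apply: HU; rewrite in_cons eqxx.
  have HPB' : P + 1 + size (xs ++ rest) <= B by move: HPB; rewrite /= size_cat; lia.
  case Hx : (c0 \in X).
  - move: Hl2; rewrite Hx => /eqP Hl2; rewrite Hl2 subnn in R.
    stp. rewrite /=.
    apply: (wp_mono (b := 22 * size xs + 1)); [lia| move=> c; exact|].
    apply: (IH _ rest M Hp (P + 1)) => //; try lia.
    + rewrite R10; apply: eq_count => c.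
      rewrite mem_cat inE; case: (eqVneq c c0) => [->|Hne]; first by rewrite Hx.
      by rewrite orbF.
    + move=> c; have [H1 [H2 H3]] := HA c; rewrite mem_cat inE.
      case: (eqVneq c c0) => [E|Hne]; last by rewrite orbF.
      subst c; rewrite orbT; split=> //; split; first by rewrite H2 Hx.
      by rewrite H3 Hx.
  - move: Hl2; rewrite Hx => /eqP Hl2.
    stp. rewrite ifN; last by apply/eqP; lia.
    stp. stp. stp.
    match goal with H : M 14 = _ |- _ =>
      rewrite /upd ifN in H; [rewrite Hl3 Hx addn0 in H | apply/eqP; lia] end.
    stp. stp. stp. stp. stp.
    pose Hp' := upd (upd Hp (c0 + c0 + B) VID) (c0 + c0 + B + 1) (prev c0 + 1).
    have HA' : ArrInv Hp' B VID prev (X ++ [:: c0]).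
      move=> c; have [H1 [H2 H3]] := HA c; rewrite /Hp' /upd mem_cat inE.
      case: (eqVneq c c0) => [->|Hne].
      - rewrite Hx /= ifN; last by apply/eqP; lia.
        by rewrite !eqxx /= addn1.
      - rewrite orbF ifN; last by apply/eqP; lia.
        rewrite ifN; last by apply/eqP => E; move/eqP: Hne; lia.
        rewrite ifN; last by apply/eqP => E; move/eqP: Hne; lia.
        rewrite ifN; last by apply/eqP => E; move/eqP: Hne; lia.
        by [].
    have Hcnt : count (fun c => q <= prev c + (c \in X ++ [:: c0])) U =
                count (fun c => q <= prev c + (c \in X)) U + (prev c0 + 1 == q).
      rewrite (@count_upd U (fun c => prev c + (c \in X)) (fun c => prev c + (c \in X ++ [:: c0])) c0) //.
      + by rewrite mem_cat inE eqxx orbT addn1.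
      + by move=> c Hc; rewrite mem_cat inE (negbTE Hc) orbF.
      + by rewrite Hx mem_cat inE eqxx orbT addn0 addn1.
    have Hin'' : holds Hp' (P + 1) (xs ++ rest).
      by apply: holds_upd; [lia|]; apply: holds_upd; [lia|].
    case: (eqVneq (prev c0 + 1) q) => Hq.
    + stp. rewrite ifT; last by apply/eqP; lia.
      stp. stp.
      apply: (wp_mono (b := 22 * size xs + 1)); [lia| move=> c; exact|].
      apply: (IH _ rest M Hp' (P + 1)) => //; try lia.
      by match goal with H : M 8 = _ |- _ => rewrite H end; rewrite Hcnt Hq eqxx.
    + stp. rewrite ifN; last by apply/eqP; move/eqP: Hq; lia.
      stp.
      apply: (wp_mono (b := 22 * size xs + 1)); [lia| move=> c; exact|].
      apply: (IH _ rest M Hp' (P + 1)) => //; try lia.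
      by match goal with H : M 8 = _ |- _ => rewrite H end; rewrite Hcnt (negbTE Hq) addn0.
Qed.


Definition encE (es : seq (rat * seq nat)) := flatten (map encode_entry es).
Definition occE (es : seq (rat * seq nat)) := flatten (map snd es).

Lemma eloop n m k B q VID prev U es : forall X rest M Hp P,
  heapeq M Hp -> M 1 = 1 -> M 3 = n -> M 4 = m -> M 5 = k -> M 6 = B -> M 7 = q ->
  M 2 = P -> M 8 = count (fun c => q <= prev c + (c \in X)) U ->
  M 10 = size es -> M 12 = VID ->
  holds Hp P (encE es ++ rest) -> P + size (encE es ++ rest) <= B -> 16 <= P ->
  ArrInv Hp B VID prev X -> {subset occE es <= U} -> uniq U ->
  wp (22 * size (encE es) + 1) (65, M)
     (XPost n m k B q VID 0 prev U (P + size (encE es)) (X ++ occE es) rest 94).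
Proof.
elim: es => [|[lam S] es IH] X rest M Hp P HH R1 R3 R4 R5 R6 R7 R2 R8 R10 R12 Hin HPB HP16 HA HU uU.
- stp. rewrite /=. apply: wp_done; split=> //; exists Hp.
  by rewrite /encE /occE /= addn0 cats0; do 13 (split => //).
-   have E0 : encE ((lam, S) :: es) =
     [:: absz (numq lam); absz (denq lam); size S] ++ S ++ encE es.
    by rewrite /encE /= /encode_entry.
  have E1 : occE ((lam, S) :: es) = S ++ occE es by [].
  rewrite E0 E1 in Hin HPB HU *.
  rewrite -!catA /= in Hin.
  have HS : Hp (P + 1 + 1) = size S.
    by apply: holds_hd; do 2 apply: holds_tl; exact: Hin.
  have Hin' : holds Hp (P + 1 + 1 + 1) (S ++ encE es ++ rest).
    by do 3 apply: holds_tl; exact: Hin.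
  rewrite size_cat /=.
  apply: (wp_mono (b := 6 + ((22 * size S + 1) + (22 * size (encE es) + 1)))).
    rewrite /= size_cat; lia. move=> c; exact.
  stp. rewrite /=. stp. stp. stp. stp. stp.
  apply: wp_seq.
  apply: (wp_mono (b := 22 * size S + 1)) => //; last first.
    apply: (@xloop n m k B q VID (size es) prev U S X (encE es ++ rest) M Hp (P + 1 + 1 + 1)) => //.
    + match goal with H : M 10 = _ |- _ => rewrite H end; by rewrite /= subn1.
    + move: HPB; rewrite /= !size_cat; lia.
    + lia.
    + by move=> x Hx; apply: HU; rewrite mem_cat Hx.
  move=> [pc' M']; rewrite /XPost /= => -[Hpc [Hp' [HH' [R1' [R3' [R4' [R5' [R6' [R7' [R2' [R8' [R10' [R12' [Hin2 [HPB2 HA2]]]]]]]]]]]]]]].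
  subst pc'.
  apply: (wp_mono (b := 22 * size (encE es) + 1)) => //; last first.
    apply: (IH _ rest M' Hp' (P + 1 + 1 + 1 + size S)) => //.
    + move: HPB2; rewrite size_cat; lia.
    + lia.
    + by move=> x Hx; apply: HU; rewrite mem_cat Hx orbT.
  move=> c [Hc1 [Hp2 Hrest]]; split=> //; exists Hp2.
  have -> : P + (3 + size (S ++ encE es)) = P + 1 + 1 + 1 + size S + size (encE es) by rewrite size_cat; lia.
  by rewrite catA.
Qed.


Definition encV (ds : seq (seq (rat * seq nat))) := flatten (map encode_voter ds).

Definition VPost (n m k q : nat) (U : seq nat) (f : nat -> nat) (c : nat * memory) :=
  c.1 = 96 /\ exists Hp, heapeq c.2 Hp /\ c.2 1 = 1 /\ c.2 3 = n /\ c.2 4 = m /\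
   c.2 5 = k /\ c.2 8 = count (fun c => q <= f c) U.

Lemma vloop n m k B q U rest ds : forall prev VID M Hp P,
  heapeq M Hp -> M 1 = 1 -> M 3 = n -> M 4 = m -> M 5 = k -> M 6 = B -> M 7 = q ->
  M 2 = P -> M 8 = count (fun c => q <= prev c) U -> M 12 = VID ->
  VID + size ds = n.+1 -> 0 < VID ->
  holds Hp P (encV ds ++ rest) -> P + size (encV ds ++ rest) <= B -> 16 <= P ->
  (forall c, Hp (c + c + B) < VID /\ Hp (c + c + B + 1) = prev c) ->
  {subset flatten (map occE ds) <= U} -> uniq U ->
  wp (22 * size (encV ds) + 3) (60, M)
     (VPost n m k q U (fun c => prev c + count (fun d => c \in occE d) ds)).
Proof.
elim: ds => [|d ds IH] prev VID M Hp P HH R1 R3 R4 R5 R6 R7 R2 R8 R12 HV HV0 Hin HPB HP16 HA HU uU.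
- stp. stp. rewrite ifN; last by apply/eqP; move: HV => /=; lia.
  stp. apply: wp_done; split=> //; exists Hp; do 5 (split=> //).
  rewrite /=; by match goal with H : M 8 = _ |- _ => rewrite H end; apply: eq_count => c /=; rewrite addn0.
- have E0 : encV (d :: ds) = size d :: encE d ++ encV ds by [].
  rewrite E0 /= in Hin HPB *.
  have Hd : Hp P = size d by exact: holds_hd Hin.
  have Hin' := holds_tl Hin.
  apply: (wp_mono (b := 4 + ((22 * size (encE d) + 1) + (2 + (22 * size (encV ds) + 3))))).
    rewrite size_cat; lia. move=> c; exact.
  stp. stp. rewrite ifT; last by apply/eqP; move: HV => /=; lia.
  stp. stp.
  apply: wp_seq.
  apply: (wp_mono (b := 22 * size (encE d) + 1)) => //; last first.
    apply: (@eloop n m k B q VID prev U d [::] (encV ds ++ rest) M Hp (P + 1)) => //.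
    + by match goal with H : M 8 = _ |- _ => rewrite H end; apply: eq_count => c /=; rewrite addn0.
    + by move: Hin'; rewrite ?catA.
    + move: HPB; rewrite !size_cat; lia.
    + lia.
    + move=> c; have [H1 H2] := HA c; rewrite in_nil addn0; split; [lia|split=>//].
      by apply/eqP; lia.
    + by move=> x Hx; apply: HU; rewrite /= mem_cat Hx.
  move=> [pc' M']; rewrite /XPost /= => -[Hpc [Hp' [HH' [R1' [R3' [R4' [R5' [R6' [R7' [R2' [R8' [R10' [R12' [Hin2 [HPB2 HA2]]]]]]]]]]]]]]].
  subst pc'.
  stp. stp.
  apply: (wp_mono (b := 22 * size (encV ds) + 3)) => //; last first.
    apply: (IH (fun c => prev c + (c \in occE d)) (VID + 1) _ Hp' (P + 1 + size (encE d))) => //.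
    + move: HV => /=; lia.
    + lia.
    + move: HPB2; rewrite size_cat; lia.
    + move=> c; have [H1 [H2 H3]] := HA2 c; rewrite H3 /=; split=> //; lia.
    + by move=> x Hx; apply: HU; rewrite /= mem_cat Hx orbT.
  move=> c [Hc1 [Hp2 Hrest]]; split=> //; exists Hp2.
  move: Hrest => [? [? [? [? [? ->]]]]]; do 5 (split=> //).
  by apply: eq_count => c' /=; rewrite addnA.
Qed.


Definition RPost (s : seq nat) (D : nat) (c : nat * memory) :=
  c.1 = 44 /\ exists Hp, heapeq c.2 Hp /\ c.2 1 = 1 /\ c.2 2 = D /\
    holds Hp D s /\ (forall x, D + D <= x -> Hp x = 0).

Lemma copyloop s D fuel : forall j M Hp, D - 1 - j = fuel ->
  heapeq M Hp -> M 1 = 1 -> M 2 = D -> M 3 = j -> 15 <= j -> j <= D - 1 ->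
  size s <= D - 1 -> 24 <= D ->
  (forall x, 16 <= x -> x < D -> Hp x = init_mem s x) ->
  (forall j', j' < j -> Hp (D + j') = nth 0 s j') ->
  (forall x, D + D - 1 <= x -> Hp x = 0) ->
  wp (8 * fuel + 3) (36, M) (RPost s D).
Proof.
elim: fuel => [|f IH] j M Hp Hf HH R1 R2 R3 Hj1 Hj2 HL HD Ha Hb Hc.
- stp. stp. stp. rewrite ifT; last by apply/eqP; lia.
  apply: wp_done; split=> //; exists Hp; do 3 (split=> //); split.
  + move=> j' Hj'; apply: Hb; lia.
  + move=> x Hx; apply: Hc; lia.
- apply: (wp_mono (b := 8 + (8 * f + 3))); [lia|move=> c; exact|].
  stp. stp. stp. rewrite ifN; last by apply/eqP; lia.
  stp. rewrite Ha in R; try lia.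
  stp. stp. stp. stp.
  apply: (IH (j + 1) M (upd Hp (D + j) (init_mem s (j + 1)))) => //; try lia.
  + move=> x Hx1 Hx2; rewrite /upd ifN ?Ha //; apply/eqP; lia.
  + move=> j' Hj'; rewrite /upd; case: eqP => [E|NE].
    * have -> : j' = j by lia. by rewrite addn1.
    * apply: Hb; lia.
  + move=> x Hx; rewrite /upd ifN ?Hc //; apply/eqP; lia.
Qed.

Lemma reloc_gen s M : 3 <= size s -> heapeq M (init_mem s) ->
  M 0 = size s -> M 1 = nth 0 s 0 -> M 2 = nth 0 s 1 -> M 3 = nth 0 s 2 ->
  M 4 = nth 0 s 3 -> M 5 = nth 0 s 4 -> M 6 = nth 0 s 5 -> M 7 = nth 0 s 6 ->
  M 8 = nth 0 s 7 -> M 9 = nth 0 s 8 -> M 10 = nth 0 s 9 -> M 11 = nth 0 s 10 ->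
  M 12 = nth 0 s 11 -> M 13 = nth 0 s 12 -> M 14 = nth 0 s 13 -> M 15 = nth 0 s 14 ->
  wp (8 * (8 * size s) + 60) (0, M) (RPost s (8 * size s)).
Proof.
move=> Hs HH R0 R1 R2 R3 R4 R5 R6 R7 R8 R9 R10 R11 R12 R13 R14 R15.
apply: (wp_mono (b := 36 + (8 * (8 * size s - 1 - 15) + 3))); [lia|move=> c; exact|].
do 36 stp.
have ED : forall r, M r = size s + size s + (size s + size s) +
    (size s + size s + (size s + size s)) + 1 + 1 + 1 + 1 + 1 + 1 + 1 + 1 + 1 +
    1 + 1 + 1 + 1 + 1 - 14 -> M r = 8 * size s by move=> r ->; lia.
match goal with H : M 2 = _ |- _ => have {}H := ED _ H end.
match type of HH with heapeq _ ?Hp =>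
  apply: (@copyloop s (8 * size s) _ 15 M Hp) => //; try lia end.
- move=> x H1 H2; rewrite /upd; repeat (rewrite ifN; last by apply/eqP; lia).
  by [].
- move=> j Hj; rewrite /upd.
  do 15 (case: j Hj => [|j] Hj; first by repeat (case: ifP => /eqP ?; try lia)).
  lia.
- move=> x Hx; rewrite /upd; repeat (rewrite ifN; last by apply/eqP; lia).
  rewrite /init_mem; case: x Hx => [|x] Hx; first lia.
  rewrite nth_default //; lia.
Qed.

Lemma reloc s : 3 <= size s ->
  wp (8 * (8 * size s) + 60) (0, init_mem s) (RPost s (8 * size s)).
Proof. by move=> Hs; apply: reloc_gen. Qed.


Definition TPost n m k P B Hp (c : nat * memory) :=
  c.1 = 58 /\ heapeq c.2 Hp /\ c.2 1 = 1 /\ c.2 2 = P /\ c.2 3 = n /\ c.2 4 = m /\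
  c.2 5 = k /\ c.2 6 = B /\ (forall x, (c.2 7 <= x) = (n <= x * k)).

Ltac rr r := match goal with H : ?M r = _ |- context[?M r] => rewrite H end.

Lemma thrloop n m k P B Hp fuel : forall Q M, n - Q = fuel ->
  heapeq M Hp -> M 1 = 1 -> M 2 = P -> M 3 = n -> M 4 = m -> M 5 = k -> M 6 = B ->
  M 7 = Q -> M 13 = Q * k -> 0 < k -> (Q = 0 \/ (Q - 1) * k < n) ->
  wp (5 * fuel + 2) (53, M) (TPost n m k P B Hp).
Proof.
elim: fuel => [|f IH] Q M Hf HH R1 R2 R3 R4 R5 R6 R7 R13 Hk HQ.
- stp. stp. rewrite ifT; last by apply/eqP; nia.
  apply: wp_done; do 8 (split=> //).
  move=> x; rewrite /=; rr 7; apply/idP/idP => H.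
  + nia.
  + case: HQ => HQ; first by subst Q; lia.
    apply/negPn/negP => H'; have : x <= Q - 1 by lia.
    move=> H2; have : x * k <= (Q - 1) * k by apply: leq_mul.
    lia.
- case: (leqP n (Q * k)) => Hn.
  + apply: (wp_mono (b := 2 + 0)); [lia|move=> c; exact|].
    stp. stp. rewrite ifT; last by apply/eqP; lia.
    apply: wp_done; do 8 (split=> //).
    move=> x; rewrite /=; rr 7; apply/idP/idP => H.
    * have : Q * k <= x * k by apply: leq_mul. lia.
    * case: HQ => HQ; first by subst Q; lia.
      apply/negPn/negP => H'; have : x <= Q - 1 by lia.
      move=> H2; have : x * k <= (Q - 1) * k by apply: leq_mul.
      lia.
  + apply: (wp_mono (b := 5 + (5 * f + 2))); [lia|move=> c; exact|].
    stp. stp. rewrite ifN; last by apply/eqP; lia.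
    stp. stp. stp.
    apply: (IH (Q + 1) M) => //; try lia.
Qed.


Definition FPost (P : Prop) (c : nat * memory) :=
  nth IHalt prog c.1 = IHalt /\ (c.2 0 = 1 <-> P).

Lemma final_blk M Hp C m k : heapeq M Hp -> M 8 = C -> M 4 = m -> M 5 = k ->
  wp 6 (96, M) (FPost (C <= k /\ k <= m)).
Proof.
move=> HH R8 R4 R5.
stp. stp. stp. stp. stp.
case: ifP => /eqP Hz.
- stp. apply: wp_done; split=> //=.
  match goal with H : M 0 = _ |- _ => rewrite H end.
  split=> // _; lia.
- apply: wp_done; split=> //=.
  match goal with H : M 0 = _ |- _ => rewrite H end.
  split=> // H; lia.
Qed.

Definition occs I := flatten (map occE (inst_lot I)).
Definition Ncnt I c := count (fun d => c \in occE d) (inst_lot I).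

Definition SPost I (c : nat * memory) :=
  c.1 = 96 /\ exists Hp, heapeq c.2 Hp /\ c.2 4 = inst_m I /\ c.2 5 = inst_k I /\
   c.2 8 = count (fun c => inst_n I <= Ncnt I c * inst_k I) (undup (occs I)).

Lemma setup_blk I M Hp D :
  valid_instance I -> D = 8 * size (encode I) ->
  heapeq M Hp -> M 1 = 1 -> M 2 = D -> holds Hp D (encode I) ->
  (forall x, D + D <= x -> Hp x = 0) ->
  wp (9 + (5 * inst_n I + 2) + (2 + (22 * size (encV (inst_lot I)) + 3))) (44, M) (SPost I).
Proof.
case=> Hn Hk Hsz _ ED HH R1 R2 Hin Hz.
have Hs3 : 3 <= size (encode I) by rewrite /encode size_cat.
have E : encode I = [:: inst_n I; inst_m I; inst_k I] ++ encV (inst_lot I) by [].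
rewrite E /= in Hin.
have H0 : Hp D = inst_n I by exact: holds_hd Hin.
have Hin1 := holds_tl Hin.
have H1 : Hp (D + 1) = inst_m I by exact: holds_hd Hin1.
have Hin2 := holds_tl Hin1.
have H2 : Hp (D + 1 + 1) = inst_k I by exact: holds_hd Hin2.
have Hin3 := holds_tl Hin2.
have HsE : size (encode I) = 3 + size (encV (inst_lot I)) by rewrite E size_cat.
do 9 stp.
apply: wp_seq.
apply: (wp_mono (b := 5 * inst_n I + 2)) => //; last first.
  apply: (@thrloop (inst_n I) (inst_m I) (inst_k I) (D + 1 + 1 + 1) (D + 1 + 1 + 1 + (D + 1 + 1 + 1)) Hp _ 0 M) => //; try lia.
move=> [pc' M'] [/= -> [HH' [R1' [R2' [R3' [R4' [R5' [R6' Hq]]]]]]]].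
set q := M' 7 in Hq.
have Hq1 : 0 < q by rewrite lt0n; apply/negP => /eqP E0; move: (Hq 0); rewrite E0 mul0n leqn0; lia.
have Rq : M' 7 = q by [].
clearbody q.
stp. stp.
apply: (wp_mono (b := 22 * size (encV (inst_lot I)) + 3)) => //; last first.
  apply: (@vloop (inst_n I) (inst_m I) (inst_k I) (D + 1 + 1 + 1 + (D + 1 + 1 + 1)) q
            (undup (occs I)) [::] (inst_lot I) (fun _ => 0) 1 _ Hp (D + 1 + 1 + 1)) => //; try lia.
  - match goal with H : _ 8 = _ |- _ => rewrite H end.
    rewrite (@eq_count _ _ pred0) ?count_pred0 // => c /=; rewrite leqn0; lia.
  - by rewrite cats0.
  - rewrite cats0; lia.
  - move=> c; split; rewrite Hz //; lia.
  - by move=> x; rewrite mem_undup.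
  - exact: undup_uniq.
move=> [pc'' M''] [/= -> [Hp' [HH'' [R1'' [R3'' [R4'' [R5'' R8'']]]]]]].
split=> //; exists Hp'; do 3 (split=> //).
rewrite /= R8''; apply: eq_count => c /=; by rewrite Hq.
Qed.

Import Order.TTheory GRing.Theory Num.Theory.

Lemma count_card (T : Type) (l : seq T) x0 (a : pred T) n :
  size l = n -> count a l = #|[set i : 'I_n | a (nth x0 l i)]|.
Proof.
move=> <-; rewrite -sum1_count (big_nth x0) big_mkord -sum1dep_card.
by apply: eq_bigl.
Qed.

Lemma setof_single m S x (Hx : x < m) :
  #|setof m S| = 1 -> x \in S -> setof m S = [set Ordinal Hx].
Proof.
move=> /eqP /cards1P [y Ey] xS; rewrite Ey; congr [set _].
have : Ordinal Hx \in setof m S by rewrite inE.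
by rewrite Ey inE => /eqP.
Qed.

Lemma setof_nil m : setof m [::] = set0.
Proof. by apply/setP => x; rewrite !inE. Qed.

Lemma sum_ge0_filter (l : seq (rat * seq nat)) (P : pred (rat * seq nat)) :
  all (fun p => 0 < p.1)%R l -> (0 <= \sum_(p <- l | P p) p.1)%R.
Proof.
elim: l => /= [_|p l IH /andP[Hp Hl]]; first by rewrite big_nil.
rewrite big_cons; case: (P p); last exact: IH.
by apply: addr_ge0; [exact: ltW|exact: IH].
Qed.

Lemma sum_pos_filter (l : seq (rat * seq nat)) (P : pred (rat * seq nat)) :
  all (fun p => 0 < p.1)%R l -> has P l -> (0 < \sum_(p <- l | P p) p.1)%R.
Proof.
elim: l => //= p l IH /andP[Hp Hl] /orP[HP|HP]; rewrite big_cons.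
- by rewrite HP; apply: ltr_wpDr => //; exact: sum_ge0_filter.
- case: (P p); last exact: IH.
  by apply: addr_gt0 => //; exact: IH.
Qed.

Lemma sum_zero_filter (l : seq (rat * seq nat)) (P : pred (rat * seq nat)) :
  ~~ has P l -> (\sum_(p <- l | P p) p.1 = 0)%R.
Proof.
elim: l => /= [_|p l IH]; first by rewrite big_nil.
by rewrite negb_or big_cons => /andP[/negbTE -> Hl]; exact: IH.
Qed.

Lemma plausibleP I (A : 'I_(inst_n I) -> {set 'I_(inst_m I)}) :
  valid_instance I ->
  plausible A <-> forall i : 'I_(inst_n I), exists2 p, p \in lottery I i & setof (inst_m I) p.2 = A i.
Proof.
case=> _ _ _ Hv; split.
- move=> HP i.
  case: (boolP (has (fun p => setof (inst_m I) p.2 == A i) (lottery I i))) => [/hasP [p Hp /eqP E]|Hn]; first by exists p.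
  have H0 := sum_zero_filter Hn.
  move: HP; rewrite /plausible /profile_prob (bigD1 i) //= H0 mul0r ltxx.
  by [].
- move=> H; rewrite /plausible /profile_prob; apply: prodr_gt0 => i _.
  have [_ Hpos _ _] := Hv i (ltn_ord i).
  apply: sum_pos_filter => //; have [p Hp Ep] := H i.
  by apply/hasP; exists p => //; apply/eqP.
Qed.

Lemma occ_single I (i : 'I_(inst_n I)) (c : 'I_(inst_m I)) :
  valid_instance I -> singleton_lotteries I ->
  (val c \in occE (lottery I i)) <->
  exists2 p, p \in lottery I i & setof (inst_m I) p.2 = [set c].
Proof.
case=> _ _ _ Hv Hsg; split.
- case/flatten_mapP => p Hp Hc; exists p => //.
  have [_ /allP Hpos _ _] := Hv i (ltn_ord i).
  rewrite (setof_single (ltn_ord c) (Hsg i (ltn_ord i) p Hp (Hpos p Hp)) Hc).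
  by congr [set _]; apply: val_inj.
- case=> p Hp E; apply/flatten_mapP; exists p => //.
  have : c \in setof (inst_m I) p.2 by rewrite E set11.
  by rewrite inE.
Qed.

Lemma Ncnt_card I c : valid_instance I ->
  Ncnt I c = #|[set i : 'I_(inst_n I) | c \in occE (lottery I i)]|.
Proof. by case=> _ _ Hsz _; rewrite /Ncnt (count_card [::] _ Hsz). Qed.

Lemma extend_set (T : finType) (H : {set T}) j :
  #|H| + j <= #|T| -> exists W : {set T}, H \subset W /\ #|W| = #|H| + j.
Proof.
elim: j => [|j IH] Hj; first by exists H; rewrite addn0.
have [W [HW EW]] : exists W : {set T}, H \subset W /\ #|W| = #|H| + j by apply: IH; lia.
have : 0 < #|~: W| by move: (cardsC W); lia.
case/card_gt0P => x; rewrite inE => Hx.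
exists (x |: W); split.
- by apply: (subset_trans HW); apply/subsetP => y Hy; rewrite inE Hy orbT.
- by rewrite cardsU1 Hx EW; lia.
Qed.

Lemma occs_lt I x : valid_instance I -> x \in occs I -> x < inst_m I.
Proof.
case=> _ _ Hsz Hv /flatten_mapP [d Hd /flatten_mapP [p Hp Hx]].
case/(nthP [::]): Hd => i Hi Ed.
rewrite Hsz in Hi; have [_ _ _ /allP Hm] := Hv i Hi.
by move: (Hm p); rewrite /lottery Ed => /(_ Hp) /allP /(_ x Hx).
Qed.

Lemma count_U I (P : nat -> bool) : valid_instance I ->
  (forall c, P c -> 0 < Ncnt I c) ->
  count P (undup (occs I)) = #|[set c : 'I_(inst_m I) | P (val c)]|.
Proof.
move=> Hval HP.
have -> : #|[set c : 'I_(inst_m I) | P (val c)]| = count P (iota 0 (inst_m I)).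
  rewrite (count_card 0 _ (size_iota 0 (inst_m I))); apply: eq_card => i.
  by rewrite !inE nth_iota.
rewrite -!size_filter; apply: perm_size; apply: uniq_perm.
- by apply: filter_uniq; exact: undup_uniq.
- by apply: filter_uniq; exact: iota_uniq.
move=> x; rewrite !mem_filter mem_undup mem_iota /=.
case Px: (P x) => //=; apply/idP/idP => [H|_]; first exact: occs_lt H.
have := HP x Px; rewrite /Ncnt -has_count => /hasP [d Hd Hx].
by apply/flatten_mapP; exists d.
Qed.

Lemma necjr_iff I : valid_instance I -> singleton_lotteries I ->
  ExistsNecJR I <->
  (count (fun c => inst_n I <= Ncnt I c * inst_k I) (undup (occs I)) <= inst_k I /\
   inst_k I <= inst_m I).
Proof.
move=> Hval Hsg; have [Hn Hk Hsz Hv] := Hval.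
rewrite (count_U (P := fun c => inst_n I <= Ncnt I c * inst_k I)) //; last first.
  by move=> c Hc; rewrite lt0n; apply/negP => /eqP E; move: Hc; rewrite E mul0n leqn0; lia.
set Hs := [set c : 'I_(inst_m I) | inst_n I <= Ncnt I (val c) * inst_k I].
have Hrat : forall x : nat,
    (((inst_n I)%:R / (inst_k I)%:R : rat) <= (x%:R : rat))%R = (inst_n I <= x * inst_k I).
  by move=> x; rewrite ler_pdivrMr ?ltr0n // -natrM ler_nat.
split.
- case=> W [HW HJR]; split; last by rewrite -HW -[X in _ <= X]card_ord max_card.
  rewrite -HW; apply: subset_leq_card; apply/subsetP => c; rewrite inE => Hc.
  apply/negPn/negP => HcW.
  pose A := fun i : 'I_(inst_n I) => if val c \in occE (lottery I i) then [set c]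
     else setof (inst_m I) (head (0%R, [::]) (lottery I i)).2.
  have HA : plausible A.
    apply/plausibleP => // i; rewrite /A; case: ifP => Hi.
    + by case/(occ_single i c Hval Hsg): Hi => p Hp E; exists p.
    + have [Hne _ _ _] := Hv i (ltn_ord i).
      exists (head (0%R, [::]) (lottery I i)) => //.
      by case: (lottery I i) Hne => //= p l _; rewrite inE eqxx.
  have [] := HJR A HA [set i : 'I_(inst_n I) | val c \in occE (lottery I i)].
  + by rewrite Hrat -Ncnt_card.
  + by exists c => i; rewrite inE /A => ->; rewrite set11.
  + move=> i; rewrite inE /A => -> /set0Pn [x]; rewrite !inE => /andP [/eqP ->].
    by rewrite (negbTE HcW).
- case=> HC Hkm.
  have [W [HsW EW]] : exists W : {set 'I_(inst_m I)}, Hs \subset W /\ #|W| = #|Hs| + (inst_k I - #|Hs|).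
    by apply: extend_set; rewrite subnKC // card_ord.
  exists W; split; first by rewrite EW; lia.
  move=> A HA V' HV' [c Hc].
  have HV'c : V' \subset [set i : 'I_(inst_n I) | val c \in occE (lottery I i)].
    apply/subsetP => i Hi; rewrite inE.
    have [p Hp E] := (plausibleP A Hval).1 HA i.
    apply/flatten_mapP; exists p => //.
    by have := Hc i Hi; rewrite -E inE.
  have cH : c \in Hs.
    rewrite inE; move: HV'; rewrite Hrat => H1.
    rewrite (Ncnt_card _ Hval); have H2 := subset_leq_card HV'c.
    by apply: leq_trans H1 _; rewrite leq_mul2r H2 orbT.
  have : 0 < #|V'|.
    rewrite lt0n; apply/negP => /eqP E; move: HV'; rewrite E Hrat mul0n leqn0; lia.
  case/card_gt0P => i Hi; exists i => //.
  apply/set0Pn; exists c; rewrite inE Hc //=; exact: (subsetP HsW).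
Qed.


Lemma size_bitsize s : size s <= bitsize s.
Proof. elim: s => [|x s IH]; rewrite /bitsize ?big_nil ?big_cons //= -/(bitsize s); lia. Qed.

Lemma size_encV ds : size ds <= size (encV ds).
Proof. by elim: ds => //= d ds IH; rewrite /encV /= -/(encV ds) /encode_voter /= size_cat; lia. Qed.

Theorem theorem6 :
  exists (P : seq instr) (c d : nat),
    forall I : instance,
      valid_instance I -> singleton_lotteries I ->
      exists t : nat,
        (t <= c * (bitsize (encode I)).+1 ^ d)%N /\
        exists M : memory,
          exec P t (0%N, init_mem (encode I)) = Some M /\
          (M 0%N = 1%N <-> ExistsNecJR I).
Proof.
exists prog, 200, 1 => I Hval Hsg.
have [Hn Hk Hsz Hv] := Hval.
have E : encode I = [:: inst_n I; inst_m I; inst_k I] ++ encV (inst_lot I) by [].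
have HsE : size (encode I) = 3 + size (encV (inst_lot I)) by rewrite E size_cat.
have Hs3 : 3 <= size (encode I) by rewrite HsE.
have Hnl : inst_n I <= size (encV (inst_lot I)) by rewrite -Hsz size_encV.
have Hb := size_bitsize (encode I).
have W : wp (8 * (8 * size (encode I)) + 60 +
             (9 + (5 * inst_n I + 2) + (2 + (22 * size (encV (inst_lot I)) + 3))) + 6)
            (0, init_mem (encode I))
            (FPost (count (fun c => inst_n I <= Ncnt I c * inst_k I) (undup (occs I)) <= inst_k I /\
                    inst_k I <= inst_m I)).
  apply: wp_seq; apply: wp_seq.
  apply: wp_mono (reloc Hs3) => //.
  move=> [pc M] [/= -> [Hp [HH [R1 [R2 [Hin Hz]]]]]].
  apply: wp_mono (setup_blk Hval erefl HH R1 R2 Hin Hz) => //.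
  move=> [pc' M'] [/= -> [Hp' [HH' [R4 [R5 R8]]]]].
  exact: final_blk HH' R8 R4 R5.
case: W => t [c' [Ht [Hst [Hhalt Hiff]]]].
exists t.+1; split.
  rewrite expn1; apply: leq_trans (_ : _ <= 200 * (size (encode I)).+1) _; last first.
    by rewrite leq_mul2l ltnS Hb.
  lia.
exists c'.2; split.
  by rewrite -addn1 (exec_steps 1 Hst) /= Hhalt.
by rewrite Hiff necjr_iff.
Qed.
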